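(* Let $L$ be a multisorted algebra in the quantifier-free signature. Then $L$ satisfies axioms (0)–(6) if and only if $L$ is isomorphic to a subalgebra of the quantifier-free algebra $A(W)$ of some set $W$.
   Context: Throughout, the Boolean prime ideal theorem is assumed. Signature. There is a sort $n$ for each natural number $n\ge 0$. For every function $\alpha\colon\{1,\dots,n\}\to\{1,\dots,k\}$ there is a unary function symbol (''substitution'') $\alpha\colon n\to k$ (argument of sort $n$, value of sort $k$). For each sort there are constants $0,1$, binary operations $\vee,\wedge$ and a unary operation $\neg$. This is the quantifier-free signature. For substitutions $\alpha\colon k\to n$, $\beta\colon n\to m$, $\beta\circ\alpha\colon k\to m$ is the substitution symbol of the composite function, while $\beta(\alpha(r))$ is composition inside an algebra; $\mathrm{id}\colon n\to n$ is the identity substitution. Concrete algebras. For a set $W$ and substitution $\alpha\colon\{1,\dots,n\}\to\{1,\dots,k\}$: $\alpha^{\mathrm{tuple}}(x_1,\dots,x_k)=(x_{\alpha(1)},\dots,x_{\alpha(n)})$ and $\alpha^{\mathrm{relation}}(r)=\{\bar x\in W^k:\alpha^{\mathrm{tuple}}(\bar x)\in r\}$ for $r\subseteq W^n$. The quantifier-free algebra $A(W)$ interprets sort $n$ as $\mathcal P(W^n)$, $\alpha$ as $\alpha^{\mathrm{relation}}$, and $0,1,\vee,\wedge,\neg$ as $\emptyset,W^n,\cup,\cap$, complement in $W^n$. Partitioning cylindrifications: given $k_1,\dots,k_m$ and $n=\sum k_j$, the substitutions $c_i\colon k_i\to n$, $c_i(l)=l+\sum_{j<i}k_j$. In an algebra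 $x\le y$ (also $y\ge x$) means $x=x\wedge y$. Axioms: (0) For all partitioning cylindrifications $c_1,\dots,c_m$ and all $r_i,s_i$ of sort $k_i$: if $\bigvee_i c_i(s_i)\ge\bigwedge_i c_i(r_i)$ then $s_i\ge r_i$ for some $i$ (including $m=0$: $0\ge1$ fails in sort $0$). (1) Each sort is a bounded distributive lattice under $0,1,\vee,\wedge$. (2) Every substitution preserves $0,1,\vee,\wedge$. (3) $(\beta\circ\alpha)(r)=\beta(\alpha(r))$. (4) $\mathrm{id}(r)=r$. (5) $\alpha(\neg r)=\neg\alpha(r)$ for every substitution $\alpha$. (6) $r\vee\neg r=1$ and $r\wedge\neg r=0$ in every sort. *)

(* Defs.v *)
From mathcomp Require Import all_boot.
Set Implicit Arguments. Unset Strict Implicit. Unset Printing Implicit Defensive.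

(* Sorts are natural numbers n; sort n is indexed by the variable set 'I_n
   (0-based version of {1,...,n}).  A substitution symbol alpha : n -> k is a
   finite function {ffun 'I_n -> 'I_k}. *)

Record qfalg := QFAlg {
  car  : nat -> Type;
  subst : forall n k : nat, {ffun 'I_n -> 'I_k} -> car n -> car k;
  zero : forall n, car n;
  one  : forall n, car n;
  join : forall n, car n -> car n -> car n;
  meet : forall n, car n -> car n -> car n;
  neg  : forall n, car n -> car n
}.

Arguments subst {q n k}.
Arguments zero q n : clear implicits.
Arguments one q n : clear implicits.
Arguments join {q n}.
Arguments meet {q n}.
Arguments neg {q n}.

Definition scomp n k m (beta : {ffun 'I_k -> 'I_m}) (alpha : {ffun 'I_n -> 'I_k})
  : {ffun 'I_n -> 'I_m} := [ffun i => beta (alpha i)].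
Definition sid n : {ffun 'I_n -> 'I_n} := [ffun i => i].

Definition le (L : qfalg) n (x y : car L n) : Prop := x = meet x y.

Definition bigjoin (L : qfalg) n (xs : seq (car L n)) : car L n :=
  foldr (@join L n) (zero L n) xs.
Definition bigmeet (L : qfalg) n (xs : seq (car L n)) : car L n :=
  foldr (@meet L n) (one L n) xs.

Definition offset m (k : 'I_m -> nat) (i : 'I_m) : nat :=
  \sum_(j < m | (j < i)%N) k j.

Lemma offset_le m (k : 'I_m -> nat) (i : 'I_m) :
  (offset k i <= \sum_(j < m | j != i) k j)%N.
Proof.
rewrite /offset (big_mkcond (fun j : 'I_m => (j < i)%N))
  (big_mkcond (fun j : 'I_m => j != i)) /=.
apply: leq_sum => j _; case: ifP => // h.
by rewrite -val_eqE /= (ltn_eqF h).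
Qed.

Lemma cyl_lt m (k : 'I_m -> nat) (i : 'I_m) (l : 'I_(k i)) :
  (l + offset k i < \sum_(j < m) k j)%N.
Proof.
rewrite (bigD1 i) //=.
apply: (@leq_trans (k i + offset k i)); first by rewrite ltn_add2r.
by rewrite leq_add2l offset_le.
Qed.

Definition cyl m (k : 'I_m -> nat) (i : 'I_m) : {ffun 'I_(k i) -> 'I_(\sum_(j < m) k j)} :=
  [ffun l => Ordinal (cyl_lt l)].

Definition ax0 (L : qfalg) : Prop :=
  forall (m : nat) (k : 'I_m -> nat) (r s : forall i : 'I_m, car L (k i)),
    le (bigmeet [seq subst (@cyl m k i) (r i) | i <- enum 'I_m])
       (bigjoin [seq subst (@cyl m k i) (s i) | i <- enum 'I_m]) ->
    exists i : 'I_m, le (r i) (s i).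

Definition ax1 (L : qfalg) : Prop :=
  forall n (x y z : car L n),
    [/\ join x (join y z) = join (join x y) z,
        meet x (meet y z) = meet (meet x y) z,
        join x y = join y x &
        meet x y = meet y x] /\
     [/\ join x (meet x y) = x,
        meet x (join x y) = x,
        meet x (join y z) = join (meet x y) (meet x z),
        join x (zero L n) = x &
        meet x (one L n) = x].

Definition ax2 (L : qfalg) : Prop :=
  forall n k (alpha : {ffun 'I_n -> 'I_k}) (x y : car L n),
    [/\ subst alpha (zero L n) = zero L k,
        subst alpha (one L n) = one L k,
        subst alpha (join x y) = join (subst alpha x) (subst alpha y) &
        subst alpha (meet x y) = meet (subst alpha x) (subst alpha y)].

Definition ax3 (L : qfalg) : Prop :=
  forall n k m (alpha : {ffun 'I_n -> 'I_k}) (beta : {ffun 'I_k -> 'I_m}) (r : car L n),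
    subst (scomp beta alpha) r = subst beta (subst alpha r).

Definition ax4 (L : qfalg) : Prop :=
  forall n (r : car L n), subst (sid n) r = r.

Definition ax5 (L : qfalg) : Prop :=
  forall n k (alpha : {ffun 'I_n -> 'I_k}) (r : car L n),
    subst alpha (neg r) = neg (subst alpha r).

Definition ax6 (L : qfalg) : Prop :=
  forall n (r : car L n), join r (neg r) = one L n /\ meet r (neg r) = zero L n.

Definition qf_axioms (L : qfalg) : Prop :=
  [/\ ax0 L, ax1 L, ax2 L, ax3 L & [/\ ax4 L, ax5 L & ax6 L]].

(* The quantifier-free algebra A(W): sort n is the set of relations on W^n,
   W^n = 'I_n -> W, relations as predicates. *)
Definition rel_of (W : Type) (n : nat) : Type := ('I_n -> W) -> Prop.

Definition A (W : Type) : qfalg :=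
  @QFAlg (rel_of W)
    (fun n k alpha r => fun x : 'I_k -> W => r (fun i : 'I_n => x (alpha i)))
    (fun n _ => False)
    (fun n _ => True)
    (fun n r s x => r x \/ s x)
    (fun n r s x => r x /\ s x)
    (fun n r x => ~ r x).

Definition is_hom (L M : qfalg) (h : forall n, car L n -> car M n) : Prop :=
  [/\ forall n k (alpha : {ffun 'I_n -> 'I_k}) (x : car L n),
        h k (subst alpha x) = subst alpha (h n x),
      forall n, h n (zero L n) = zero M n,
      forall n, h n (one L n) = one M n,
      forall n (x y : car L n), h n (join x y) = join (h n x) (h n y) &
    [/\ forall n (x y : car L n), h n (meet x y) = meet (h n x) (h n y) &
      forall n (x : car L n), h n (neg x) = neg (h n x)]].

(* L is isomorphic to a subalgebra of M: there is an injective homomorphism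
   (its image is then a subalgebra isomorphic to L). *)
Definition embeds (L M : qfalg) : Prop :=
  exists h : forall n, car L n -> car M n,
    is_hom h /\ forall n, injective (h n).

(* Main.v *)
Require Import Defs.
From mathcomp Require Import all_boot.
From mathcomp Require Import boolp.
From mathcomp Require classical_sets.
From mathcomp Require Import zify.
From Stdlib Require Import Lia Classical.
Set Implicit Arguments. Unset Strict Implicit. Unset Printing Implicit Defensive.
Notation zero := Defs.zero.
Notation one := Defs.one.
Notation join := Defs.join.
Notation meet := Defs.meet.
Notation le := Defs.le.

Record isBA (B : Type) (mt jn : B -> B -> B) (ng : B -> B) (bz bo : B) : Prop := IsBA {
  ba_jA : forall x y w, jn x (jn y w) = jn (jn x y) w;
  ba_mA : forall x y w, mt x (mt y w) = mt (mt x y) w;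
  ba_jC : forall x y, jn x y = jn y x;
  ba_mC : forall x y, mt x y = mt y x;
  ba_ab1 : forall x y, jn x (mt x y) = x;
  ba_ab2 : forall x y, mt x (jn x y) = x;
  ba_dist : forall x y w, mt x (jn y w) = jn (mt x y) (mt x w);
  ba_j0 : forall x, jn x bz = x;
  ba_m1 : forall x, mt x bo = x;
  ba_n1 : forall x, jn x (ng x) = bo;
  ba_n2 : forall x, mt x (ng x) = bz }.

Section BA.
Set Default Proof Using "All".
Variables (B : Type) (mt jn : B -> B -> B) (ng : B -> B) (bz bo : B).
Hypothesis hB : isBA mt jn ng bz bo.
Let jA := ba_jA hB. Let mA := ba_mA hB. Let jC := ba_jC hB. Let mC := ba_mC hB.
Let ab1 := ba_ab1 hB. Let ab2 := ba_ab2 hB. Let dist := ba_dist hB. Let j0 := ba_j0 hB.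
Let m1 := ba_m1 hB. Let n1 := ba_n1 hB. Let n2 := ba_n2 hB.

Definition ble x y := x = mt x y.

Lemma mm x : mt x x = x.
Proof. by rewrite -{2}(ab1 x bo) m1 ab2. Qed.
Lemma m0 x : mt x bz = bz.
Proof. by rewrite -(n2 x) mA mm. Qed.
Lemma ble_trans x y w : ble x y -> ble y w -> ble x w.
Proof. by rewrite /ble => h1 h2; rewrite {1}h1 h2 mA -h1. Qed.
Lemma ble_meet x y w : ble x y -> ble x w -> ble x (mt y w).
Proof. by rewrite /ble => h1 h2; rewrite mA -h1 -h2. Qed.
Lemma ble_mtl x y : ble (mt x y) x.
Proof. by rewrite /ble -mA (mC y x) mA mm. Qed.
Lemma ble_mtr x y : ble (mt x y) y.
Proof. by rewrite /ble -mA mm. Qed.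
Lemma ble_jl x y : ble x (jn x y).
Proof. by rewrite /ble ab2. Qed.
Lemma ble_o x : ble x bo.
Proof. by rewrite /ble m1. Qed.
Lemma ble_z x : ble x bz -> x = bz.
Proof. by rewrite /ble m0. Qed.
Lemma ble_refl x : ble x x.
Proof. by rewrite /ble mm. Qed.

Lemma mfg f g x : mt f x = bz -> mt g (ng x) = bz -> mt f g = bz.
Proof.
move=> h1 h2; rewrite -(m1 (mt f g)) -(n1 x) dist.
have -> : mt (mt f g) x = bz by rewrite (mC f g) -mA h1 m0.
have -> : mt (mt f g) (ng x) = bz by rewrite -mA h2 m0.
by rewrite j0.
Qed.

Lemma ne_split r s : r <> s -> mt r (ng s) <> bz \/ mt s (ng r) <> bz.
Proof.
move=> rs; case: (EM (mt r (ng s) = bz)) => h1; last by left.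
case: (EM (mt s (ng r) = bz)) => h2; last by right.
exfalso; apply: rs.
have e1 : r = mt r s by rewrite -{1}(m1 r) -(n1 s) dist h1 j0.
have e2 : s = mt s r by rewrite -{1}(m1 s) -(n1 r) dist h2 j0.
by rewrite e1 {2}e2 mC.
Qed.

Definition filt (F : B -> Prop) := [/\ F bo, (forall x y, F x -> F y -> F (mt x y)) &
  (forall x y, F x -> ble x y -> F y)].
Definition ultra (U : B -> Prop) := [/\ filt U, ~ U bz & forall x, U x \/ U (ng x)].

Section Ultra.
Variable U : B -> Prop.
Hypothesis hU : ultra U.
Lemma u_up x y : U x -> ble x y -> U y. Proof. by case: hU => [[_ _ h]] _ _; apply: h. Qed.
Lemma u_one : U bo. Proof. by case: hU => [[h _ _]]. Qed.
Lemma u_zero : ~ U bz. Proof. by case: hU. Qed.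
Lemma u_meet x y : U (mt x y) <-> U x /\ U y.
Proof.
split; first by move=> h; split; apply: u_up h _; [apply: ble_mtl|apply: ble_mtr].
by case: hU => [[_ h _]] _ _ [hx hy]; apply: h.
Qed.
Lemma u_neg x : U (ng x) <-> ~ U x.
Proof.
split; last by case: hU => _ _ /(_ x) [].
move=> h1 h2; apply: u_zero; rewrite -(n2 x); exact/u_meet.
Qed.
Lemma u_join x y : U (jn x y) <-> U x \/ U y.
Proof.
split; last first.
  case=> h; apply: u_up h _; first exact: ble_jl.
  by rewrite jC; apply: ble_jl.
move=> h; case: (EM (U x)) => hx; first by left.
case: (EM (U y)) => hy; first by right.
exfalso; apply: u_zero.
have : U (mt (mt (ng x) (ng y)) (jn x y)) by apply/u_meet; split => //; apply/u_meet; split; apply/u_neg.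
rewrite dist.
have -> : mt (mt (ng x) (ng y)) x = bz by rewrite (mC (ng x) (ng y)) -mA (mC (ng x) x) n2 m0.
have -> : mt (mt (ng x) (ng y)) y = bz by rewrite -mA (mC (ng y) y) n2 m0.
by rewrite j0.
Qed.
End Ultra.

Section Ext.
Variable F : B -> Prop.
Hypotheses (hF : filt F) (pF : ~ F bz).

Definition PF (G : B -> Prop) := [/\ forall x, F x -> G x, filt G & ~ G bz].
Definition TT := {G : B -> Prop | PF G}.
Definition RR (a b : TT) : bool := `[< forall x, sval a x -> sval b x >].

Lemma key (G : B -> Prop) : PF G -> (forall G', PF G' -> (forall x, G x -> G' x) -> forall x, G' x -> G x) ->
  forall x, ~ G x -> exists f, G f /\ mt f x = bz.
Proof.
move=> [FG [G1 Gm Gu] Gz] mx x nx.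
pose G' y := exists f, G f /\ ble (mt f x) y.
case: (EM (G' bz)) => [[f [Gf le]]|nG']; first by exists f; split => //; apply: ble_z.
exfalso; apply: nx; apply: (mx G'); last by exists bo; split => //; rewrite (mC bo x) m1; apply: ble_refl.
- split => //; first by move=> y /FG Gy; exists y; split => //; apply: ble_mtl.
  split.
  + by exists bo; split => //; apply: ble_o.
  + move=> y y' [f [Gf l1]] [g [Gg l2]]; exists (mt f g); split; first exact: Gm.
    apply: ble_meet.
    * apply: ble_trans l1; apply: ble_meet; last exact: ble_mtr.
      by apply: ble_trans (ble_mtl _ _) _; apply: ble_mtl.
    * apply: ble_trans l2; apply: ble_meet; last exact: ble_mtr.
      by apply: ble_trans (ble_mtl _ _) _; apply: ble_mtr.
  + by move=> y y' [f [Gf l1]] l2; exists f; split => //; apply: ble_trans l2.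
- by move=> y Gy; exists y; split => //; apply: ble_mtl.
Qed.

Lemma ultra_ext : exists U, ultra U /\ forall x, F x -> U x.
Proof.
have PF0 : PF F by split.
have [t tmax] : exists t, classical_sets.premaximal RR t.
apply: (@classical_sets.ZL_preorder TT (exist _ F PF0) RR).
- by move=> a; apply/asboolP.
- by move=> a b c /asboolP h1 /asboolP h2; apply/asboolP => x /h1 /h2.
- move=> A Atot.
  pose G x := F x \/ exists a, A a /\ sval a x.
  have PG : PF G.
    split; first by move=> x; left.
    + split; first by left; case: hF.
      * move=> x y [Fx|[a [Aa ax]]] [Fy|[b [Ab bx]]].
        -- by left; case: hF => _ h _; apply: h.
        -- right; exists b; split => //; case: (svalP b) => h [_ hm _] _; apply: hm => //; exact: h.
        -- right; exists a; split => //; case: (svalP a) => h [_ hm _] _; apply: hm => //; exact: h.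
        -- right; case: (Atot a b Aa Ab) => /asboolP sub.
           ++ exists b; split => //; case: (svalP b) => h [_ hm _] _; apply: hm => //; exact: sub.
           ++ exists a; split => //; case: (svalP a) => h [_ hm _] _; apply: hm => //; exact: sub.
      * move=> x y [Fx|[a [Aa ax]]] l.
        -- by left; case: hF => _ _ h; apply: h l.
        -- right; exists a; split => //; case: (svalP a) => _ [_ _ hu] _; exact: hu l.
    + case=> [//|[a [_ az]]]; case: (svalP a) => _ _; exact.
  exists (exist _ G PG) => s As; apply/asboolP => x sx /=; right; by exists s.
exists (sval t); case: (svalP t) => FG fG zG.
have mx : forall G', PF G' -> (forall x, sval t x -> G' x) -> forall x, G' x -> sval t x.
  move=> G' PG' sub; have h : RR t (exist _ G' PG') by apply/asboolP.
  by move: (tmax _ h) => /asboolP.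
split => //; split => // x.
case: (EM (sval t x)) => hx; first by left.
case: (EM (sval t (ng x))) => hnx; first by right.
have [f [tf e1]] := key (svalP t) mx hx.
have [g [tg e2]] := key (svalP t) mx hnx.
exfalso; apply: zG; rewrite -(mfg e1 e2); by case: fG => _ h _; apply: h.
Qed.
End Ext.
End BA.


Fixpoint inL (U : Type) (p : U) (s : seq U) : Prop :=
  if s is a :: s' then a = p \/ inL p s' else False.

Lemma In_map_mem (T : eqType) (U : Type) (F : T -> U) (s : seq T) (i : T) :
  i \in s -> inL (F i) (map F s).
Proof.
elim: s => //= a s IH; rewrite in_cons => /orP[/eqP ->|/IH]; by [left|right].
Qed.

Lemma In_map_enum (T : finType) (U : Type) (F : T -> U) (i : T) :
  inL (F i) (map F (enum T)).
Proof. by apply: In_map_mem; rewrite mem_enum. Qed.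

Lemma In_map_inv (T U : Type) (F : T -> U) (s : seq T) p :
  inL p (map F s) -> exists i, inL i s /\ p = F i.
Proof.
elim: s => //= a s IH [<-|/IH [i [hi ->]]]; first by exists a; split => //; left.
by exists i; split => //; right.
Qed.

Section Cyl.
Variables (m : nat) (k : 'I_m -> nat).

Lemma offset_mono (i i' : 'I_m) : (i < i')%N -> (offset k i + k i <= offset k i')%N.
Proof.
move=> lt; rewrite [offset k i'](bigD1 i) //= addnC leq_add2l /offset.
rewrite (big_mkcond (fun j : 'I_m => (j < i)%N)) (big_mkcond (fun j : 'I_m => (j < i')%N && (j != i))) /=.
apply: leq_sum => j _; case: ifP => // h.
by rewrite (ltn_trans h lt) -val_eqE /= (ltn_eqF h).
Qed.

Lemma cyl_inj (i i' : 'I_m) (l : 'I_(k i)) (l' : 'I_(k i')) :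
  cyl k i l = cyl k i' l' -> existT (fun i => 'I_(k i)) i l = existT _ i' l'.
Proof.
move=> /(congr1 val); rewrite !ffunE /= => e.
case: (ltngtP i i') => h.
- have := offset_mono h; have := ltn_ord l; move: e; lia.
- have := offset_mono h; have := ltn_ord l'; move: e; lia.
- have ei : i = i' by apply: val_inj.
  subst i'; have el : l = l' by apply: val_inj => /=; move: e; lia.
  by rewrite el.
Qed.

Lemma cyl_surj (p : 'I_(\sum_(j < m) k j)) :
  exists s : {i : 'I_m & 'I_(k i)}, cyl k (tag s) (tagged s) = p.
Proof.
pose F (s : {i : 'I_m & 'I_(k i)}) := cyl k (tag s) (tagged s).
have Finj : injective F.
  move=> [i l] [i' l'] /=; rewrite /F /=; exact: cyl_inj.
have cardF : (#|{: {i : 'I_m & 'I_(k i)}}| >= #|'I_(\sum_(j < m) k j)|)%N.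
  rewrite card_tagged card_ord sumnE big_map.
  under eq_bigr do rewrite card_ord.
  by rewrite big_enum.
have := inj_card_onto Finj cardF p => /codomP [s ->].
by exists s.
Qed.
End Cyl.


Lemma A_bigmeet W n (xs : seq (car (A W) n)) w :
  bigmeet xs w <-> forall p, inL p xs -> p w.
Proof.
elim: xs => [|a xs IH] /=; first by split.
split; first by move=> [aw /IH h] p [<-|/h].
by move=> h; split; [apply: h; left|apply/IH => p hp; apply: h; right].
Qed.

Lemma A_bigjoin W n (xs : seq (car (A W) n)) w :
  bigjoin xs w <-> exists p, inL p xs /\ p w.
Proof.
elim: xs => [|a xs IH] /=; first by split => // [[p []]].
split; first by move=> [aw|/IH [p [hp pw]]]; [exists a; split => //; left|exists p; split => //; right].
by move=> [p [[<-|hp] pw]]; [left|right; apply/IH; exists p].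
Qed.

Ltac eqA := apply: funext => w /=; apply: propext; tauto.

Unset Implicit Arguments.
Section Easy.
Variables (L : qfalg) (W : Type) (h : forall n, car L n -> car (A W) n).
Hypotheses (hh : is_hom h) (inj : forall n, injective (h n)).

Let hs : forall n k (alpha : {ffun 'I_n -> 'I_k}) (x : car L n),
        h k (subst alpha x) = subst alpha (h n x).
Proof. by case: hh. Qed.
Let hz : forall n, h n (zero L n) = zero (A W) n. Proof. by case: hh. Qed.
Let ho : forall n, h n (one L n) = one (A W) n. Proof. by case: hh. Qed.
Let hj : forall n (x y : car L n), h n (join x y) = join (h n x) (h n y). Proof. by case: hh. Qed.
Let hm : forall n (x y : car L n), h n (meet x y) = meet (h n x) (h n y). Proof. by case: hh => _ _ _ _ []. Qed.
Let hn : forall n (x : car L n), h n (neg x) = neg (h n x). Proof. by case: hh => _ _ _ _ []. Qed.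

Lemma hbm n (xs : seq (car L n)) : h n (bigmeet xs) = bigmeet (map (h n) xs).
Proof. by elim: xs => [|a xs IH] /=; rewrite ?ho // hm IH. Qed.
Lemma hbj n (xs : seq (car L n)) : h n (bigjoin xs) = bigjoin (map (h n) xs).
Proof. by elim: xs => [|a xs IH] /=; rewrite ?hz // hj IH. Qed.

Lemma easy_axioms : qf_axioms L.
Proof.
split.
- move=> m k r s le1.
  apply: NNPP => nex.
  have X : forall i, {x | h _ (r i) x /\ ~ h _ (s i) x}.
    move=> i; apply: cid; apply: NNPP => nx; apply: nex; exists i.
    apply: (inj (k i)); rewrite hm; apply: funext => x /=; apply: propext; split => //.
      by move=> hx; split => //; apply: NNPP => hs'; apply: nx; exists x.
    by case.
  pose w (p : 'I_(\sum_(j < m) k j)) : W :=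
    let s := sval (cid (cyl_surj p)) in sval (X (tag s)) (tagged s).
  have wc : forall i l, w (cyl k i l) = sval (X i) l.
    move=> i l; rewrite /w; case: (cid _) => sg /= /cyl_inj e.
    by have -> : sg = existT _ i l by rewrite -e; case: sg {e}.
  have Mw : h _ (bigmeet [seq subst (cyl k i) (r i) | i <- enum 'I_m]) w.
    rewrite hbm; apply: (proj2 (A_bigmeet _ _)) => p hp; case: (In_map_inv hp) => q [hq ->].
    case: (In_map_inv hq) => i [_ ->]; rewrite hs /=.
    have -> : (fun i0 => w (cyl k i i0)) = sval (X i) by apply: funext => l; exact: wc.
    by case: (X i) => x [].
  move: le1 => /(congr1 (h _)); rewrite hm => e.
  move: Mw; rewrite e /= => -[_]; rewrite hbj => /(proj1 (A_bigjoin _ _)) [p [hp pw]].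
  case: (In_map_inv hp) pw => q [hq ->]; case: (In_map_inv hq) => i [_ ->]; rewrite hs /=.
  have -> : (fun i0 => w (cyl k i i0)) = sval (X i) by apply: funext => l; exact: wc.
  by case: (X i) => x [].
- move=> n x y z; split; split; apply: (inj n); repeat rewrite ?hj ?hm ?hz ?ho; eqA.
- move=> n k alpha x y; split; apply: (inj k); repeat rewrite ?hs ?hj ?hm ?hz ?ho; eqA.
- move=> n k m alpha beta r; apply: (inj m); rewrite !hs; apply: funext => x /=.
  by congr (h n r _); apply: funext => i; rewrite ffunE.
- split.
  + move=> n r; apply: (inj n); rewrite hs; apply: funext => x /=.
    by congr (h n r _); apply: funext => i; rewrite ffunE.
  + move=> n k alpha r; apply: (inj k); repeat rewrite ?hs ?hn; eqA.
  + move=> n r; split; apply: (inj n); repeat rewrite ?hj ?hm ?hn ?hz ?ho;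
    apply: funext => w /=; apply: propext; split => //; tauto.
Qed.
End Easy.
Set Implicit Arguments.


Section Hard.
Variable L : qfalg.
Hypothesis hax : qf_axioms L.

Let h1 : ax1 L. Proof. by case: hax. Qed.
Let h2 : ax2 L. Proof. by case: hax. Qed.
Let h3 : ax3 L. Proof. by case: hax. Qed.
Let h5 : ax5 L. Proof. by case: hax => _ _ _ _ []. Qed.
Let h6 : ax6 L. Proof. by case: hax => _ _ _ _ []. Qed.
Let h0 : ax0 L. Proof. by case: hax. Qed.

Lemma LjA n (x y w : car L n) : join x (join y w) = join (join x y) w. Proof. by case: (h1 x y w) => [[]]. Qed.
Lemma LmA n (x y w : car L n) : meet x (meet y w) = meet (meet x y) w. Proof. by case: (h1 x y w) => [[]]. Qed.
Lemma LjC n (x y : car L n) : join x y = join y x. Proof. by case: (h1 x y x) => [[]]. Qed.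
Lemma LmC n (x y : car L n) : meet x y = meet y x. Proof. by case: (h1 x y x) => [[]]. Qed.
Lemma Lab1 n (x y : car L n) : join x (meet x y) = x. Proof. by case: (h1 x y x) => _ []. Qed.
Lemma Lab2 n (x y : car L n) : meet x (join x y) = x. Proof. by case: (h1 x y x) => _ []. Qed.
Lemma Ldist n (x y w : car L n) : meet x (join y w) = join (meet x y) (meet x w). Proof. by case: (h1 x y w) => _ []. Qed.
Lemma Lj0 n (x : car L n) : join x (zero L n) = x. Proof. by case: (h1 x x x) => _ []. Qed.
Lemma Lm1 n (x : car L n) : meet x (one L n) = x. Proof. by case: (h1 x x x) => _ []. Qed.
Lemma Ln1 n (x : car L n) : join x (neg x) = one L n. Proof. by case: (h6 x). Qed.
Lemma Ln2 n (x : car L n) : meet x (neg x) = zero L n. Proof. by case: (h6 x). Qed.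

Lemma LBA n : isBA (@meet L n) (@join L n) (@neg L n) (zero L n) (one L n).
Proof.
split; [exact: LjA|exact: LmA|exact: LjC|exact: LmC|exact: Lab1|exact: Lab2|exact: Ldist
  |exact: Lj0|exact: Lm1|exact: Ln1|exact: Ln2].
Qed.

Definition UL n (P : car L n -> Prop) := ultra (@meet L n) (@neg L n) (zero L n) (one L n) P.

Lemma ulL n (u : car L n) : u <> zero L n -> exists P, UL P /\ P u.
Proof.
move=> nz.
have : exists U, UL U /\ forall x, ble (@meet L n) u x -> U x.
  apply: (ultra_ext (LBA n)).
- split.
  + exact: (ble_o (LBA n) u).
  + by move=> x y l1 l2; exact: (ble_meet (LBA n) l1 l2).
  + by move=> x y l1 l2; exact: (ble_trans (LBA n) l1 l2).
- by move=> /(ble_z (LBA n)).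
case=> P [uP hP]; exists P; split => //; apply: hP; exact: (ble_refl (LBA n) u).
Qed.

Section UL.
Variables (n : nat) (P : car L n -> Prop) (hP : UL P).
Lemma UL_meet x y : P (meet x y) <-> P x /\ P y.
Proof. exact (u_meet (LBA n) hP x y). Qed.
Lemma UL_join x y : P (join x y) <-> P x \/ P y.
Proof. exact (u_join (LBA n) hP x y). Qed.
Lemma UL_neg x : P (neg x) <-> ~ P x.
Proof. exact (u_neg (LBA n) hP x). Qed.
Lemma UL_zero : ~ P (zero L n). Proof. exact (u_zero (LBA n) hP). Qed.
Lemma UL_one : P (one L n). Proof. exact (u_one (LBA n) hP). Qed.
Lemma UL_bigmeet xs x : P (bigmeet xs) -> inL x xs -> P x.
Proof.
elim: xs => //= a xs IH /UL_meet [Pa Pxs] [<-|/IH]; by [|apply].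
Qed.
End UL.


Lemma Ls0 n k (alpha : {ffun 'I_n -> 'I_k}) : subst alpha (zero L n) = zero L k. Proof. by case: (h2 alpha (zero L n) (zero L n)). Qed.
Lemma Ls1 n k (alpha : {ffun 'I_n -> 'I_k}) : subst alpha (one L n) = one L k. Proof. by case: (h2 alpha (zero L n) (zero L n)). Qed.
Lemma Lsj n k (alpha : {ffun 'I_n -> 'I_k}) (x y : car L n) : subst alpha (join x y) = join (subst alpha x) (subst alpha y). Proof. by case: (h2 alpha x y). Qed.
Lemma Lsm n k (alpha : {ffun 'I_n -> 'I_k}) (x y : car L n) : subst alpha (meet x y) = meet (subst alpha x) (subst alpha y). Proof. by case: (h2 alpha x y). Qed.

Definition Blk := {n : nat & {t : car L n | t <> zero L n}}.
Definition W := {b : Blk & 'I_(projT1 b)}.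

Section Block.
Variables (m : nat) (f : 'I_m -> Blk).
Definition kk (i : 'I_m) := projT1 (f i).
Definition NN := \sum_(i < m) kk i.
Definition uu : car L NN := bigmeet [seq subst (cyl kk i) (sval (projT2 (f i))) | i <- enum 'I_m].

Lemma uu_nz : uu <> zero L NN.
Proof.
move=> e.
have [i hi] : exists i, le (sval (projT2 (f i))) (zero L (kk i)).
  apply: (h0 (r := fun i => sval (projT2 (f i))) (s := fun i => zero L (kk i))).
  rewrite -/uu e.
  have -> : bigjoin [seq subst (cyl kk i) (zero L (kk i)) | i <- enum 'I_m] = zero L NN.
    by elim: (enum 'I_m) => //= i s IH; rewrite IH Ls0 Lj0.
  exact: (esym (mm (LBA NN) (zero L NN))).
by case: (projT2 (f i)) hi => t nz /= /(ble_z (LBA _)).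
Qed.

Definition UU : car L NN -> Prop := sval (cid (ulL uu_nz)).
Lemma UU_ul : UL UU. Proof. by rewrite /UU; case: (cid _) => P []. Qed.
Lemma UU_uu : UU uu. Proof. by rewrite /UU; case: (cid _) => P []. Qed.
Lemma UU_cyl i : UU (subst (cyl kk i) (sval (projT2 (f i)))).
Proof. apply: (UL_bigmeet UU_ul UU_uu); exact: In_map_enum. Qed.

Definition Pos (w : W) (p : nat) := exists i : 'I_m, [/\ f i = projT1 w,
  (forall i', f i' = projT1 w -> (i <= i')%N) & p = val (projT2 w) + offset kk i].

Lemma Pos_fun w p p' : Pos w p -> Pos w p' -> p = p'.
Proof.
move=> [i [e1 m1 ->]] [i' [e2 m2 ->]].
have -> // : i = i' by apply: val_inj; apply/eqP; rewrite eqn_leq m1 // m2.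
Qed.

Lemma minimal b : (exists i, f i = b) -> exists i, f i = b /\ forall i', f i' = b -> (i <= i')%N.
Proof.
move=> ex.
pose p (q : nat) := `[< exists H : (q < m)%N, f (Ordinal H) = b >].
have exp : exists q, p q.
  by case: ex => i e; exists i; apply/asboolP; exists (ltn_ord i); rewrite -e; congr f; apply: val_inj.
case: (ex_minnP exp) => q /asboolP [H e] hmin.
exists (Ordinal H); split => // i' e'; apply: hmin; apply/asboolP.
by exists (ltn_ord i'); rewrite -e'; congr f; apply: val_inj.
Qed.

Lemma Pos_ex w : (exists i, f i = projT1 w) -> exists o : 'I_NN, Pos w (val o).
Proof.
move=> /minimal [i [e mi]].
have lt : (val (projT2 w) < kk i)%N by rewrite /kk e; exact: ltn_ord.
exists (Ordinal (cyl_lt (Ordinal lt))); exists i; split => //.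
Qed.

Definition Cover k (x : 'I_k -> W) := forall a, exists i, f i = projT1 (x a).
Definition Tj k (x : 'I_k -> W) (r : car L k) :=
  exists s : {ffun 'I_k -> 'I_NN}, (forall a, Pos (x a) (val (s a))) /\ UU (subst s r).

Lemma sg_ex k (x : 'I_k -> W) : Cover x -> exists s : {ffun 'I_k -> 'I_NN}, forall a, Pos (x a) (val (s a)).
Proof.
move=> cv; have [g hg] := fin_all_exists (fun a => Pos_ex (cv a)).
by exists (finfun g) => a; rewrite ffunE.
Qed.

Lemma Tj_iff k (x : 'I_k -> W) (s : {ffun 'I_k -> 'I_NN}) r : (forall a, Pos (x a) (val (s a))) ->
  (Tj x r <-> UU (subst s r)).
Proof.
move=> hs; split; last by move=> h; exists s.
move=> [s' [hs' u]]; suff -> : s = s' by [].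
by apply/ffunP => a; apply: val_inj; apply: Pos_fun (hs a) (hs' a).
Qed.

Section Tjx.
Variables (k : nat) (x : 'I_k -> W) (cv : Cover x).
Lemma Tj_meet r r' : Tj x (meet r r') <-> Tj x r /\ Tj x r'.
Proof. have [s hs] := sg_ex cv; rewrite !(Tj_iff _ hs) Lsm; exact: UL_meet UU_ul _ _. Qed.
Lemma Tj_join r r' : Tj x (join r r') <-> Tj x r \/ Tj x r'.
Proof. have [s hs] := sg_ex cv; rewrite !(Tj_iff _ hs) Lsj; exact: UL_join UU_ul _ _. Qed.
Lemma Tj_neg r : Tj x (neg r) <-> ~ Tj x r.
Proof. have [s hs] := sg_ex cv; rewrite !(Tj_iff _ hs) h5; exact: UL_neg UU_ul _. Qed.
Lemma Tj_zero : Tj x (zero L k) <-> False.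
Proof. have [s hs] := sg_ex cv; rewrite !(Tj_iff _ hs) Ls0; split => //; exact: UL_zero UU_ul. Qed.
Lemma Tj_one : Tj x (one L k) <-> True.
Proof. have [s hs] := sg_ex cv; rewrite !(Tj_iff _ hs) Ls1; split => // _; exact: UL_one UU_ul. Qed.
Lemma Tj_subst n (alpha : {ffun 'I_n -> 'I_k}) r :
  Tj (fun a => x (alpha a)) r <-> Tj x (subst alpha r).
Proof.
have [s hs] := sg_ex cv; rewrite (Tj_iff _ hs).
have hs' : forall a, Pos (x (alpha a)) (val (scomp s alpha a)) by move=> a; rewrite ffunE.
by rewrite (Tj_iff _ hs') h3.
Qed.
End Tjx.

Lemma Tj_blk b : (exists i, f i = b) ->
  Tj (fun l : 'I_(projT1 b) => existT (fun b => 'I_(projT1 b)) b l) (sval (projT2 b)).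
Proof.
move=> /minimal [i [e mi]]; subst b.
exists (cyl kk i); split; last exact: UU_cyl.
by move=> l; exists i; split => //; rewrite ffunE.
Qed.
End Block.


Definition J := {m : nat & 'I_m -> Blk}.
Definition smt (A B : J -> Prop) := fun j => A j /\ B j.
Definition sjn (A B : J -> Prop) := fun j => A j \/ B j.
Definition sng (A : J -> Prop) := fun j => ~ A j.
Definition sz : J -> Prop := fun _ => False.
Definition so : J -> Prop := fun _ => True.

Lemma SBA : isBA smt sjn sng sz so.
Proof.
split=> *; apply: funext => j; apply: propext; rewrite /smt /sjn /sng /sz /so; tauto.
Qed.

Definition E (bs : seq Blk) (j : J) := forall b, inL b bs -> exists i, projT2 j i = b.
Definition F0 (A : J -> Prop) := exists bs, forall j, E bs j -> A j.

Lemma inL_catl (T : Type) (b : T) s s' : inL b s -> inL b (s ++ s').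
Proof. by elim: s => //= a s IH [->|/IH]; [left|right]. Qed.
Lemma inL_catr (T : Type) (b : T) s s' : inL b s' -> inL b (s ++ s').
Proof. by elim: s => //= a s IH /IH; right. Qed.

Lemma cover_ex bs : exists j, E bs j.
Proof.
elim: bs => [|b bs [[m f] IH]].
  have f0 : 'I_0 -> Blk by case.
  by exists (existT _ 0 f0).
pose g (i : 'I_m.+1) := if unlift ord0 i is Some i' then f i' else b.
exists (existT _ m.+1 g) => c /= hc; case: hc => [<-|hc].
  by exists ord0; rewrite /g unlift_none.
case: (IH c hc) => /= i e.
by exists (lift ord0 i); rewrite /g liftK.
Qed.

Lemma hF0 : filt smt so F0.
Proof.
split.
- by exists [::].
- move=> A B [bs hA] [bs' hB]; exists (bs ++ bs') => j hj; split.
  + by apply: hA => b hb; apply: hj; apply: inL_catl.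
  + by apply: hB => b hb; apply: hj; apply: inL_catr.
- move=> A B [bs hA] e; exists bs => j /hA; rewrite {1}e; by case.
Qed.

Lemma pF0 : ~ F0 sz.
Proof. by move=> [bs h]; case: (cover_ex bs) => j /h. Qed.

Definition UJ : (J -> Prop) -> Prop := sval (cid (ultra_ext SBA hF0 pF0)).
Lemma UJ_ul : ultra smt sng sz so UJ. Proof. by case: (svalP (cid (ultra_ext SBA hF0 pF0))). Qed.
Lemma UF0 A : F0 A -> UJ A. Proof. by case: (svalP (cid (ultra_ext SBA hF0 pF0))) => _ hP; apply: hP. Qed.

Lemma Uup (A B : J -> Prop) : UJ A -> (forall j, A j -> B j) -> UJ B.
Proof.
move=> hA hAB; apply (u_up SBA UJ_ul hA).
by apply: funext => j; apply: propext; rewrite /smt; split => [h|[]//]; split => //; apply: hAB.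
Qed.
Lemma Umeet (A B : J -> Prop) : UJ (fun j => A j /\ B j) <-> UJ A /\ UJ B.
Proof. exact (u_meet SBA UJ_ul A B). Qed.
Lemma Ujoin (A B : J -> Prop) : UJ (fun j => A j \/ B j) <-> UJ A \/ UJ B.
Proof. exact (u_join SBA UJ_ul A B). Qed.
Lemma Uneg (A : J -> Prop) : UJ (fun j => ~ A j) <-> ~ UJ A.
Proof. exact (u_neg SBA UJ_ul A). Qed.
Lemma Uzero : ~ UJ (fun _ => False). Proof. exact (u_zero SBA UJ_ul). Qed.
Lemma Uone : UJ (fun _ => True). Proof. exact (u_one SBA UJ_ul). Qed.
Lemma Uiff (C A B : J -> Prop) : UJ C -> (forall j, C j -> (A j <-> B j)) -> (UJ A <-> UJ B).
Proof.
move=> hC hAB; split => h.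
- have h' := proj2 (Umeet C A) (conj hC h).
  by apply: (Uup h') => j [cj aj]; exact: (proj1 (hAB j cj) aj).
- have h' := proj2 (Umeet C B) (conj hC h).
  by apply: (Uup h') => j [cj aj]; exact: (proj2 (hAB j cj) aj).
Qed.

Definition T k (x : 'I_k -> W) (r : car L k) := UJ (fun j => Tj (projT2 j) x r).

Lemma UCover k (x : 'I_k -> W) : UJ (fun j => Cover (projT2 j) x).
Proof.
apply: UF0; exists [seq projT1 (x a) | a <- enum 'I_k] => j hj a.
by apply: hj; apply: (In_map_enum (fun a => projT1 (x a))).
Qed.

Section Tx.
Variables (k : nat) (x : 'I_k -> W).
Lemma T_meet r r' : T x (meet r r') <-> T x r /\ T x r'.
Proof.
rewrite /T -Umeet; apply: Uiff (UCover x) _ => j cv; exact: Tj_meet cv r r'.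
Qed.
Lemma T_join r r' : T x (join r r') <-> T x r \/ T x r'.
Proof.
rewrite /T -Ujoin; apply: Uiff (UCover x) _ => j cv; exact: Tj_join cv r r'.
Qed.
Lemma T_neg r : T x (neg r) <-> ~ T x r.
Proof.
rewrite /T -Uneg; apply: Uiff (UCover x) _ => j cv; exact: Tj_neg cv r.
Qed.
Lemma T_zero : T x (zero L k) <-> False.
Proof.
split => // h; apply: Uzero.
exact: (proj1 (Uiff (B := fun _ => False) (UCover x) (fun j cv => Tj_zero cv)) h).
Qed.
Lemma T_one : T x (one L k) <-> True.
Proof.
split => // _.
exact: (proj2 (Uiff (B := fun _ => True) (UCover x) (fun j cv => Tj_one cv)) Uone).
Qed.
Lemma T_subst n (alpha : {ffun 'I_n -> 'I_k}) r :
  T (fun a => x (alpha a)) r <-> T x (subst alpha r).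
Proof.
rewrite /T; apply: Uiff (UCover x) _ => j cv; exact (Tj_subst cv alpha r).
Qed.
End Tx.

Definition hh n (r : car L n) : car (A W) n := fun x => T x r.

Lemma hh_hom : is_hom hh.
Proof.
split.
- move=> n k alpha r; apply: funext => x; apply: propext; exact: iff_sym (T_subst x alpha r).
- by move=> n; apply: funext => x; apply: propext; exact: T_zero.
- by move=> n; apply: funext => x; apply: propext; exact: T_one.
- by move=> n r r'; apply: funext => x; apply: propext; exact: T_join.
- split.
  + by move=> n r r'; apply: funext => x; apply: propext; exact: T_meet.
  + by move=> n r; apply: funext => x; apply: propext; exact: T_neg.
Qed.

Lemma realize n (a b : car L n) : meet a (neg b) <> zero L n -> exists x, T x a /\ ~ T x b.
Proof.
move=> nz; pose bk : Blk := existT _ n (exist _ (meet a (neg b)) nz).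
pose x := (fun l : 'I_n => existT (fun b => 'I_(projT1 b)) bk l).
exists x.
have : T x (meet a (neg b)).
  apply: UF0; exists [:: bk] => j hj.
  by apply: (Tj_blk (b := bk)); apply: hj; left.
move=> /(proj1 (T_meet _ _ _)) [ha hnb]; split => //; exact: (proj1 (T_neg _ _) hnb).
Qed.

Lemma hh_inj n : injective (hh (n := n)).
Proof.
move=> r s e; apply: NNPP => ne.
case: (ne_split (LBA n) ne) => /realize [x [h1' h2']]; apply: h2';
  have := congr1 (fun P => P x) e; rewrite /hh /= => eq.
- by rewrite -eq.
- by rewrite eq.
Qed.

Lemma hard : exists W : Type, embeds L (A W).
Proof. by exists W; exists hh; split; [exact: hh_hom|exact: hh_inj]. Qed.

End Hard.


Theorem theorem4p1 (L : qfalg) :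
  qf_axioms L <-> exists W : Type, embeds L (A W).
Proof.
split; first exact: hard.
by move=> [W [h [hh hi]]]; apply: easy_axioms hh hi.
Qed.
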